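(* Let $m,k$ be positive integers and let $G$ be a graph whose rank cardinality vector is $(1,m,k,1)$. Then the subgraph of $G$ induced by the vertices of corner rank 3 is connected.
   Context: All graphs are finite, nonempty, and reflexive (every vertex has a loop). $N[v]$ is the closed neighborhood of $v$ (including $v$). For distinct $v,w$, $w$ strictly corners $v$ if $N[v]\subsetneq N[w]$; $v$ is then a strict corner. Corner ranking: set $G^{(1)}=G$, $k=1$. If $G^{(k)}$ is a clique, give all its vertices rank $k$ and stop. Else if $G^{(k)}$ has no strict corners, give all its vertices rank $\infty$ and stop. Else give every strict corner of $G^{(k)}$ rank $k$, delete them to get $G^{(k+1)}$ (induced subgraph), increase $k$ and repeat. The corner rank of $G$ is the largest rank of a vertex; $X_k$ is the set of rank-$k$ vertices. The rank cardinality vector of a graph of finite corner rank $\alpha$ is $(x_\alpha,\dots,x_1)$ with $x_k=|X_k|$ (so here $|X_4|=1$, $|X_3|=m$, $|X_2|=k$, $|X_1|=1$). *)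

(* Defs.v *)
From mathcomp Require Import all_boot.
Set Implicit Arguments. Unset Strict Implicit. Unset Printing Implicit Defensive.

Definition refl_graph (T : finType) (e : rel T) : Prop :=
  reflexive e /\ symmetric e.

Section CornerRank.
Variables (T : finType) (e : rel T).

(* closed neighbourhood of v in the subgraph induced by S *)
Definition nbhd (S : {set T}) (v : T) : {set T} := [set u in S | e v u].

Definition strict_corners (S : {set T}) : {set T} :=
  [set v in S | [exists w in S, (w != v) && (nbhd S v \proper nbhd S w)]].

Definition is_clique (S : {set T}) : bool :=
  [forall u in S, forall v in S, e u v].

Definition corner_step (S : {set T}) : {set T} := S :\: strict_corners S.

(* vertex set of G^(k) (k >= 1); G^(1) = G *)
Definition level (k : nat) : {set T} := iter k.-1 corner_step [set: T].

Definition continues_to (k : nat) : bool :=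
  [forall j : 'I_k, (1 <= j) ==>
     (~~ is_clique (level j) && (strict_corners (level j) != set0))].

Definition has_rank (v : T) (k : nat) : bool :=
  [&& 1 <= k, continues_to k &
      if is_clique (level k) then v \in level k
      else v \in strict_corners (level k)].

Definition rank_set (k : nat) : {set T} := [set v | has_rank v k].

Definition induced_connected (S : {set T}) : bool :=
  [forall u in S, forall v in S,
     connect [rel x y | [&& x \in S, y \in S & e x y]] u v].

End CornerRank.

(* Main.v *)
Require Import Defs.
From mathcomp Require Import all_boot.
From mathcomp Require Import zify.
Set Implicit Arguments. Unset Strict Implicit. Unset Printing Implicit Defensive.

Section Helpers.
Variables (T : finType) (e : rel T).

Lemma stepP X v : (v \in corner_step e X) = (v \in X) && (v \notin strict_corners e X).
Proof. by rewrite /corner_step in_setD andbC. Qed.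

Lemma nbhdE X u v : (v \in nbhd e X u) = (v \in X) && e u v.
Proof. by rewrite /nbhd inE. Qed.

Lemma scP X u : (u \in strict_corners e X) =
  (u \in X) && [exists w in X, (w != u) && (nbhd e X u \proper nbhd e X w)].
Proof. by rewrite /strict_corners inE. Qed.

Lemma nbhd_card X u : #|nbhd e X u| <= #|X|.
Proof. by apply: subset_leq_card; apply/subsetP => y; rewrite nbhdE => /andP[]. Qed.

Lemma corner_max X u : u \in strict_corners e X -> exists h,
  [/\ h \in X, h \notin strict_corners e X & nbhd e X u \proper nbhd e X h].
Proof.
suff H : forall n u, #|X| - #|nbhd e X u| <= n -> u \in strict_corners e X -> exists h,
  [/\ h \in X, h \notin strict_corners e X & nbhd e X u \proper nbhd e X h].
  by move=> uc; apply: (H _ u (leqnn _)).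
clear u; elim=> [|n IH] u hn uc; move: (uc); rewrite scP => /andP[uX /exists_inP [w wX /andP[_ pw]]];
  (case wc: (w \in strict_corners e X); last by exists w; rewrite wc).
- have := proper_card pw; have := nbhd_card X w; lia.
- have [|h [hX hc ph]] := IH w _ wc.
    have := proper_card pw; have := nbhd_card X w; lia.
  by exists h; split => //; apply: proper_trans pw ph.
Qed.

End Helpers.

Theorem theorem3p24 (T : finType) (e : rel T) (m k : nat) :
  refl_graph e -> 0 < m -> 0 < k ->
  (* every vertex has finite rank, and the corner rank is 4 *)
  (forall v : T, exists j, 1 <= j <= 4 /\ has_rank e v j) ->
  #|rank_set e 4| = 1 -> #|rank_set e 3| = m ->
  #|rank_set e 2| = k -> #|rank_set e 1| = 1 ->
  induced_connected e (rank_set e 3).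
Proof.
move=> [er es] m0 k0 Hall H4 H3 H2 H1.
have [z Hz] : exists z, rank_set e 4 = [set z] by apply/cards1P; rewrite H4.
have [x Hx] : exists x, rank_set e 1 = [set x] by apply/cards1P; rewrite H1.
have z4 : has_rank e z 4 by move: (set11 z); rewrite -Hz inE.
have c4 : continues_to e 4 by case/and3P: z4.
have ncl : forall j, 0 < j < 4 -> ~~ is_clique e (level e j).
  move=> j /andP[j0 j4]; move/forallP: c4 => /(_ (Ordinal j4)) /=; rewrite j0 /=.
  by case/andP.
have rk_sc : forall v j, 0 < j < 4 -> has_rank e v j -> v \in strict_corners e (level e j).
  by move=> v j hj /and3P[_ _]; rewrite (negbTE (ncl j hj)).
have sc_rk3 : forall v, v \in strict_corners e (level e 3) -> v \in rank_set e 3.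
  move=> v hv; rewrite inE /has_rank (negbTE (ncl 3 isT)) hv andbT /=.
  apply/forallP => i; exact: (forallP c4 (widen_ord (isT : 3 <= 4) i)).
have sc_rk1 : forall v, v \in strict_corners e (level e 1) -> v = x.
  move=> v hv; apply/set1P; rewrite -Hx inE /has_rank (negbTE (ncl 1 isT)) hv andbT /=.
  by apply/forallP => -[[|i] Hi].
have E1 : level e 1 = [set: T] := erefl.
have E2 : level e 2 = corner_step e (level e 1) := erefl.
have E3 : level e 3 = corner_step e (level e 2) := erefl.
have E4 : level e 4 = corner_step e (level e 3) := erefl.
have L4z : forall w, w \in level e 4 -> w = z.
  move=> w wL4; have [j [/andP[j1 j4] hj]] := Hall w.
  have wL3 : w \in level e 3 by move: wL4; rewrite E4 stepP => /andP[].
  have wL2 : w \in level e 2 by move: wL3; rewrite E3 stepP => /andP[].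
  case: j j1 j4 hj => [|[|[|[|[|j]]]]] // _ _ hj.
  - by move: wL2; rewrite E2 stepP (rk_sc w 1 isT hj) andbF.
  - by move: wL3; rewrite E3 stepP (rk_sc w 2 isT hj) andbF.
  - by move: wL4; rewrite E4 stepP (rk_sc w 3 isT hj) andbF.
  - by apply/set1P; rewrite -Hz inE.
have zL4 : z \in level e 4.
  case/and3P: z4 => _ _; case: ifP => // _; rewrite scP; by case/andP.
have zL3 : z \in level e 3 by move: zL4; rewrite E4 stepP => /andP[].
have znS : z \notin strict_corners e (level e 3) by move: zL4; rewrite E4 stepP => /andP[].
have S_sc : forall s, s \in rank_set e 3 -> s \in strict_corners e (level e 3).
  by move=> s; rewrite inE => /(rk_sc s 3 isT).
have S_L3 : forall s, s \in rank_set e 3 -> s \in level e 3.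
  by move=> s /S_sc; rewrite scP => /andP[].
have L3_S : forall h, h \in level e 3 -> h != z -> h \in rank_set e 3.
  move=> h hL3 hz; case hc: (h \in strict_corners e (level e 3)); first exact: sc_rk3.
  have : h \in level e 4 by rewrite E4 stepP hL3 hc.
  by move/L4z => hz'; rewrite hz' eqxx in hz.
have zadj : forall s, s \in rank_set e 3 -> e z s.
  move=> s hs; have [h [hL3 hn ph]] := corner_max (S_sc s hs).
  have hL4 : h \in level e 4 by rewrite E4 stepP hL3 hn.
  rewrite -(L4z h hL4).
  have : s \in nbhd e (level e 3) s by rewrite nbhdE S_L3 // er.
  by move/(subsetP (proper_sub ph)); rewrite nbhdE => /andP[].
have zS : z \notin rank_set e 3 by apply/negP => /S_sc; rewrite (negbTE znS).
have L3_L2 : forall v, v \in level e 3 -> v \in level e 2.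
  by move=> v; rewrite E3 stepP => /andP[].
have L2_sc : forall v, v \in level e 2 -> v \notin level e 3 -> v \in strict_corners e (level e 2).
  by move=> v vL2; rewrite E3 stepP vL2 /= negbK.
have L2n3 : forall v, v \in level e 3 -> v \notin strict_corners e (level e 2).
  by move=> v; rewrite E3 stepP => /andP[].
have in1 : forall v, v \in level e 1 by move=> v; rewrite E1 in_setT.
have thruX : forall X u h t, nbhd e X u \proper nbhd e X h -> t \in X -> e t u -> e h t.
  move=> X u h t ph tX tu; have : t \in nbhd e X u by rewrite nbhdE tX es.
  by move/(subsetP (proper_sub ph)); rewrite nbhdE => /andP[].
have side : forall c d, c \in rank_set e 3 -> d \in rank_set e 3 -> ~~ e c d ->
   exists u h, [/\ u \in strict_corners e (level e 2), e c u, ~~ e z u, h \in rank_set e 3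
       & nbhd e (level e 2) u \proper nbhd e (level e 2) h].
  move=> c d cS dS ncd.
  have cL2 := L3_L2 c (S_L3 c cS). have cn := L2n3 c (S_L3 c cS).
  case: (boolP (nbhd e (level e 2) c \subset nbhd e (level e 2) z)) => sub.
    exfalso; move/negP: cn; apply; rewrite scP cL2; apply/exists_inP; exists z.
      exact: L3_L2.
    apply/andP; split.
      by apply/eqP => zc; rewrite zc cS in zS.
    apply/properP; split => //; exists d.
      by rewrite nbhdE L3_L2 ?S_L3 // zadj.
    by rewrite nbhdE negb_and ncd orbT.
  move/subsetPn: sub => [y]; rewrite !nbhdE => /andP[yL2 cy]; rewrite yL2 /= => nzy.
  have yn3 : y \notin level e 3.
    apply/negP => yL3.
    have yz : y != z by apply: contraNneq nzy => ->; rewrite er.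
    by rewrite zadj ?L3_S in nzy.
  have yc := L2_sc y yL2 yn3.
  have [h [hL2 hn ph]] := corner_max yc.
  have hy : e h y by apply: (thruX _ y h y ph yL2 (er y)).
  have hL3 : h \in level e 3 by rewrite E3 stepP hL2 hn.
  have hz : h != z by apply: contraNneq nzy => <-.
  by exists y, h; split => //; apply: L3_S.
have adjx : forall u h, u \in strict_corners e (level e 2) -> h \in level e 2 ->
    nbhd e (level e 2) u \proper nbhd e (level e 2) h -> e u x.
  move=> u h uc hL2 ph.
  have uL2 : u \in level e 2 by move: uc; rewrite scP => /andP[].
  have un1 : u \notin strict_corners e (level e 1) by move: uL2; rewrite E2 stepP => /andP[].
  case: (boolP (nbhd e (level e 1) u \subset nbhd e (level e 1) h)) => sub.
    exfalso; move/negP: un1; apply; rewrite scP in1 /=; apply/exists_inP; exists h => //.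
    apply/andP; split.
      by apply/eqP => hu; rewrite hu properxx in ph.
    apply/properP; split => //.
    move/properP: ph => [_ [w wh wu]]; exists w.
      by rewrite nbhdE in wh; rewrite nbhdE in1 /=; case/andP: wh.
    rewrite nbhdE in1 /=; rewrite nbhdE in wu; move: wh; rewrite nbhdE => /andP[wL2 _].
    by rewrite wL2 in wu.
  move/subsetPn: sub => [y]; rewrite !nbhdE in1 /= => uy nhy.
  case yL2: (y \in level e 2).
    exfalso.
    have : y \in nbhd e (level e 2) h by apply: (subsetP (proper_sub ph)); rewrite nbhdE yL2.
    by rewrite nbhdE yL2 /= => hy; rewrite hy in nhy.
  have : y \in strict_corners e (level e 1).
    by move: yL2; rewrite E2 stepP in1 /= => /negbFE.
  by move/sc_rk1 => <-.
rewrite /induced_connected; apply/forall_inP => a aS; apply/forall_inP => b bS.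
set r := [rel x0 y | [&& x0 \in rank_set e 3, y \in rank_set e 3 & e x0 y]].
case: (boolP (connect r a b)) => // nab; exfalso.
have clos : forall p q, connect r a p -> p \in rank_set e 3 -> q \in rank_set e 3 -> e p q -> connect r a q.
  move=> p q ap pS qS pq; apply: connect_trans ap (connect1 _); by rewrite /= pS qS pq.
have nab' : ~~ e a b by apply: contraNN nab => ab; apply: clos (connect0 _ _) aS bS ab.
have nba : ~~ e b a by rewrite es.
have [ua [ha [uac aua nzua haS pa]]] := side a b aS bS nab'.
have [vb [hb [vbc bvb nzvb hbS pb]]] := side b a bS aS nba.
have aL2 := L3_L2 a (S_L3 a aS). have bL2 := L3_L2 b (S_L3 b bS).
have aha : connect r a ha.
  apply: (clos a ha (connect0 _ _) aS haS); rewrite es; exact: (thruX _ ua ha a pa aL2 aua).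
have nahb : ~~ connect r a hb.
  apply/negP => ahb; move/negP: nab; apply; apply: (clos hb b ahb hbS bS).
  exact: (thruX _ vb hb b pb bL2 bvb).
have bad : forall t, t \in level e 3 -> e t ua -> e t vb -> False.
  move=> t tL3 tu tv.
  have tz : t != z by apply: contraNneq nzua => <-.
  have tS := L3_S t tL3 tz.
  have at' : connect r a t := clos ha t aha haS tS (thruX _ ua ha t pa (L3_L2 t tL3) tu).
  move/negP: nahb; apply; apply: (clos t hb at' tS hbS).
  rewrite es; exact: (thruX _ vb hb t pb (L3_L2 t tL3) tv).
have uaL2 : ua \in level e 2 by move: uac; rewrite scP => /andP[].
have vbL2 : vb \in level e 2 by move: vbc; rewrite scP => /andP[].
have ux : e ua x := adjx ua ha uac (L3_L2 ha (S_L3 ha haS)) pa.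
have vx : e vb x := adjx vb hb vbc (L3_L2 hb (S_L3 hb hbS)) pb.
have xc : x \in strict_corners e (level e 1).
  have : x \in rank_set e 1 by rewrite Hx set11.
  by rewrite inE => /(rk_sc x 1 isT).
move: xc; rewrite scP => /andP[_]. move=> /exists_inP [w wL1]. move=> /andP[wx pw].
have wu : e w ua by apply: (thruX _ x w ua pw (in1 ua)).
have wv : e w vb by apply: (thruX _ x w vb pw (in1 vb)).
have wL2 : w \in level e 2.
  rewrite E2 stepP in1 /=; apply/negP => /sc_rk1 wx'; by rewrite wx' eqxx in wx.
case: (boolP (w \in level e 3)) => wL3; first exact: bad w wL3 wu wv.
have [h' [h'L2 h'n ph']] := corner_max (L2_sc w wL2 wL3).
have h'L3 : h' \in level e 3 by rewrite E3 stepP h'L2 h'n.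
apply: (bad h' h'L3).
  by apply: (thruX _ w h' ua ph' uaL2); rewrite es.
by apply: (thruX _ w h' vb ph' vbL2); rewrite es.
Qed.
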